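(* Let $Q:\mathbb{R}^n\to\mathcal{Z}$ be a quantizer, $\mathbf{S}\in\mathbb{R}^{n\times m}$, $z\in\mathcal{Z}$, $\mathbf{x}_0,\mathbf{x}_1\in\mathbb{R}^m$, $\boldsymbol{\Psi}_0,\boldsymbol{\Psi}_1\in\mathcal{P}_n$ and $\alpha\in[0,1]$. Set $\mathcal{A}_i:=\mathcal{W}(z,\mathbf{x}_i,\boldsymbol{\Psi}_i)$ for $i\in\{0,1\}$, $\mathbf{x}_\alpha=\alpha\mathbf{x}_1+(1-\alpha)\mathbf{x}_0$, $\boldsymbol{\Psi}_\alpha=\alpha\boldsymbol{\Psi}_1+(1-\alpha)\boldsymbol{\Psi}_0$, and $\mathcal{A}_\alpha:=\{\alpha\mathbf{w}_1+(1-\alpha)\mathbf{w}_0:\mathbf{w}_1\in\mathcal{A}_1,\mathbf{w}_0\in\mathcal{A}_0\}$. Suppose one of the following holds: (a) $Q^{-1}(z)$ is convex and $\boldsymbol{\Psi}_1=\boldsymbol{\Psi}_0$; (b) $Q^{-1}(z)$ is convex and $\boldsymbol{\Psi}_i=\psi_i\mathbf{I}_n$ with $\psi_i>0$ for $i\in\{0,1\}$; (c) $\boldsymbol{\Psi}_0,\boldsymbol{\Psi}_1$ are diagonal with positive diagonal entries and $Q^{-1}(z)=\prod_{j=1}^n[a_j,b_j]$ for some $a_j\le b_j$ in $\mathbb{R}\cup\{-\infty,+\infty\}$ (each factor understood as the corresponding closed interval of $\mathbb{R}$). Then $\mathcal{A}_\alpha\subseteq\mathcal{W}(z,\mathbf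{x}_\alpha,\boldsymbol{\Psi}_\alpha)$.
   Context: $\mathcal{P}_n$ denotes the set of $n\times n$ real symmetric positive-definite matrices; $\mathbf{I}_n$ is the identity. A quantizer is any map $Q:\mathbb{R}^n\to\mathcal{Z}$ with $\mathcal{Z}$ countable. For $z\in\mathcal{Z}$, $\mathbf{x}\in\mathbb{R}^m$, $\boldsymbol{\Psi}\in\mathcal{P}_n$, define $\mathcal{W}(z,\mathbf{x},\boldsymbol{\Psi}):=\{\mathbf{w}\in\mathbb{R}^n:\boldsymbol{\Psi}^{-1}(\mathbf{S}\mathbf{x}+\mathbf{w})\in Q^{-1}(z)\}=\{\boldsymbol{\Psi}\mathbf{y}-\mathbf{S}\mathbf{x}:\mathbf{y}\in Q^{-1}(z)\}$. *)

(* Defs.v *)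
From mathcomp Require Import all_boot all_order all_algebra.
From mathcomp Require Import reals constructive_ereal.
Set Implicit Arguments. Unset Strict Implicit. Unset Printing Implicit Defensive.
Import Order.TTheory GRing.Theory Num.Theory.
Local Open Scope ring_scope.

Definition posdef (R : realType) (n : nat) (Psi : 'M[R]_n) : Prop :=
  Psi^T = Psi /\ forall v : 'cV[R]_n, v != 0 -> 0 < (v^T *m Psi *m v) 0 0.

Definition qpreim (R : realType) (n : nat) (Z : countType)
  (Q : 'cV[R]_n -> Z) (z : Z) : 'cV[R]_n -> Prop := fun y => Q y = z.

Definition Wset (R : realType) (n m : nat) (Z : countType)
  (Q : 'cV[R]_n -> Z) (S : 'M[R]_(n, m)) (z : Z) (x : 'cV[R]_m) (Psi : 'M[R]_n)
  : 'cV[R]_n -> Prop :=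
  fun w => qpreim Q z (invmx Psi *m (S *m x + w)).

Definition convex_set (R : realType) (n : nat) (C : 'cV[R]_n -> Prop) : Prop :=
  forall (y1 y0 : 'cV[R]_n) (t : R), C y1 -> C y0 -> 0 <= t <= 1 ->
    C (t *: y1 + (1 - t) *: y0).

Definition comb_set (R : realType) (n : nat) (alpha : R)
  (A1 A0 : 'cV[R]_n -> Prop) : 'cV[R]_n -> Prop :=
  fun w => exists w1 w0, A1 w1 /\ A0 w0 /\ w = alpha *: w1 + (1 - alpha) *: w0.

Definition pos_diag (R : realType) (n : nat) (Psi : 'M[R]_n) : Prop :=
  is_diag_mx Psi /\ forall i, 0 < Psi i i.

Definition is_box (R : realType) (n : nat) (C : 'cV[R]_n -> Prop) : Prop :=
  exists a b : 'I_n -> \bar R, (forall j, (a j <= b j)%E) /\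
    forall y : 'cV[R]_n, C y <-> (forall j, (a j <= (y j 0)%:E <= b j)%E).

(* Main.v *)
Require Import Defs.
From mathcomp Require Import all_boot all_order all_algebra.
From mathcomp Require Import reals constructive_ereal.
From mathcomp Require Import ring lra.
Import Order.TTheory GRing.Theory Num.Theory.
Local Open Scope ring_scope.

Lemma posdef_unit {R : realType} {n : nat} {P : 'M[R]_n} : posdef P -> P \in unitmx.
Proof.
move=> [_ hP]; rewrite -row_free_unit -kermx_eq0; apply/negPn/negP => hK.
have [i hi] : exists i, row i (kermx P) != 0.
  apply/existsP; move: hK; apply: contraR; rewrite negb_exists => /forallP h.
  apply/eqP/row_matrixP => i; rewrite row0; exact/eqP/negbNE/h.
have := hP (row i (kermx P))^T; rewrite trmx_eq0 => /(_ hi); rewrite trmxK -row_mul mulmx_ker row0 mul0mx mxE ltxx.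
by [].
Qed.

Lemma posdef_comb {R : realType} {n : nat} {P1 P0 : 'M[R]_n} {a : R} :
  posdef P1 -> posdef P0 -> 0 <= a <= 1 -> posdef (a *: P1 + (1 - a) *: P0).
Proof.
move=> [t1 h1] [t0 h0] /andP[a0 a1]; split.
  by rewrite linearD !linearZ /= t1 t0.
move=> v hv; have q1p := h1 v hv; have q0p := h0 v hv.
rewrite mulmxDr mulmxDl -!scalemxAr -!scalemxAl.
move: q1p q0p; set q1 := v^T *m P1 *m v; set q0 := v^T *m P0 *m v => q1p q0p.
have sc : forall (c : R) (M : 'cV[R]_1), (c *: M) 0 0 = c * M 0 0 by move=> c M; rewrite mxE.
have ad : forall (M N : 'cV[R]_1), (M + N) 0 0 = M 0 0 + N 0 0 by move=> M N; rewrite mxE.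
rewrite ad !sc.
case: (ltrP 0 a) => ha0.
  have h1' := mulr_gt0 ha0 q1p.
  have h0' : 0 <= (1 - a) * q0 0 0 by apply: mulr_ge0; lra.
  lra.
have -> : a = 0 by lra. by rewrite mul0r add0r subr0 mul1r.
Qed.

Lemma diag_mul {R : realType} {n : nat} (D : 'M[R]_n) (t : 'cV[R]_n) i :
  is_diag_mx D -> (D *m t) i 0 = D i i * t i 0.
Proof.
move=> /is_diag_mxP hD; rewrite mxE (bigD1 i) //= big1 ?addr0 // => j hj.
by rewrite hD ?mul0r // eq_sym.
Qed.

Lemma conv_bounds {R : realType} (s u v : R) : 0 <= s <= 1 ->
  Num.min u v <= s * u + (1 - s) * v <= Num.max u v.
Proof.
move=> /andP[s0 s1]; case: (lerP u v) => huv.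
  by apply/andP; split; nra.
by apply/andP; split; nra.
Qed.

Lemma comb_pos {R : realType} {a p q : R} : 0 <= a <= 1 -> 0 < p -> 0 < q ->
  0 < a * p + (1 - a) * q.
Proof.
move=> /andP[a0 a1] hp hq; case: (ltrP 0 a) => ha0.
  have := mulr_gt0 ha0 hp; have : 0 <= (1 - a) * q by apply: mulr_ge0; lra.
  lra.
have -> : a = 0 by lra.
by rewrite mul0r add0r subr0 mul1r.
Qed.

Lemma frac_in01 {R : realType} {a p q : R} : 0 <= a <= 1 -> 0 < p -> 0 < q ->
  0 <= a * p / (a * p + (1 - a) * q) <= 1.
Proof.
move=> ha hp hq; have hc := comb_pos ha hp hq; case/andP: ha => a0 a1.
have h1 : 0 <= a * p by apply: mulr_ge0; lra.
have h2 : 0 <= (1 - a) * q by apply: mulr_ge0; lra.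
apply/andP; split; first by apply: divr_ge0; lra.
by rewrite ler_pdivrMr // mul1r; lra.
Qed.

Lemma ebox_conv {R : realType} {s u v : R} {a b : \bar R} : 0 <= s <= 1 ->
  (a <= u%:E <= b)%E -> (a <= v%:E <= b)%E ->
  (a <= (s * u + (1 - s) * v)%:E <= b)%E.
Proof.
move=> /andP[s0 s1] /andP[au ub] /andP[av vb].
case: (lerP u v) => huv.
  have h1 : u <= s * u + (1 - s) * v by nra.
  have h2 : s * u + (1 - s) * v <= v by nra.
  by apply/andP; split; [apply: (le_trans au); rewrite lee_fin|apply: le_trans vb; rewrite lee_fin].
have h1 : v <= s * u + (1 - s) * v by nra.
have h2 : s * u + (1 - s) * v <= u by nra.
by apply/andP; split; [apply: (le_trans av); rewrite lee_fin|apply: le_trans ub; rewrite lee_fin].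
Qed.

Theorem lemma3 (R : realType) (n m : nat) (Z : countType)
  (Q : 'cV[R]_n -> Z) (S : 'M[R]_(n, m)) (z : Z) (x0 x1 : 'cV[R]_m)
  (Psi0 Psi1 : 'M[R]_n) (alpha : R) :
  posdef Psi0 -> posdef Psi1 -> 0 <= alpha <= 1 ->
  [\/ convex_set (qpreim Q z) /\ Psi1 = Psi0,
      convex_set (qpreim Q z) /\
        (exists psi0 psi1 : R, 0 < psi0 /\ 0 < psi1 /\
           Psi0 = psi0%:M /\ Psi1 = psi1%:M)
    | pos_diag Psi0 /\ pos_diag Psi1 /\ is_box (qpreim Q z)] ->
  forall w : 'cV[R]_n,
    comb_set alpha (Wset Q S z x1 Psi1) (Wset Q S z x0 Psi0) w ->
    Wset Q S z (alpha *: x1 + (1 - alpha) *: x0)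
               (alpha *: Psi1 + (1 - alpha) *: Psi0) w.
Proof.
move=> hP0 hP1 ha hcase w [w1 [w0 [hw1 [hw0 ->]]]].
have u0 := posdef_unit hP0; have u1 := posdef_unit hP1.
have uA := posdef_unit (posdef_comb hP1 hP0 ha).
rewrite /Wset /qpreim in hw1 hw0 *.
set y1 := invmx Psi1 *m (S *m x1 + w1) in hw1.
set y0 := invmx Psi0 *m (S *m x0 + w0) in hw0.
have e1 : S *m x1 + w1 = Psi1 *m y1 by rewrite /y1 mulKVmx.
have e0 : S *m x0 + w0 = Psi0 *m y0 by rewrite /y0 mulKVmx.
set D := alpha *: Psi1 + (1 - alpha) *: Psi0.
have eS : S *m (alpha *: x1 + (1 - alpha) *: x0) + (alpha *: w1 + (1 - alpha) *: w0)
   = alpha *: (Psi1 *m y1) + (1 - alpha) *: (Psi0 *m y0).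
  by rewrite -e1 -e0 mulmxDr -!scalemxAr !scalerDr addrACA.
suff [t [ht hC]] : exists t, D *m t = alpha *: (Psi1 *m y1) + (1 - alpha) *: (Psi0 *m y0)
                      /\ Q t = z.
  by rewrite eS -ht mulKmx.
case: hcase => [[hconv eP]|[hconv [p0 [p1 [p00 [p10 [e0' e1']]]]]]|[[dg0 pd0] [[dg1 pd1] [a [b [hab hbox]]]]]].
- exists (alpha *: y1 + (1 - alpha) *: y0); split; last exact: hconv.
  rewrite /D eP -scalerDl addrC subrK scale1r mulmxDr !scalemxAr.
  by rewrite -eP.
- have hc := comb_pos ha p10 p00.
  set c := alpha * p1 + (1 - alpha) * p0 in hc.
  set s := alpha * p1 / c.
  exists (s *: y1 + (1 - s) *: y0); split.
    have -> : D = c%:M by rewrite /D e0' e1' !scale_scalar_mx -raddfD.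
    rewrite e0' e1' !mul_scalar_mx !scalerDr !scalerA; congr (_ + _); congr (_ *: _).
      by rewrite /s; field; rewrite gt_eqF.
    by rewrite /s /c; field; rewrite gt_eqF.
  by apply: hconv => //; apply: frac_in01.
- have hc : forall j, 0 < D j j.
    by move=> j; rewrite /D !mxE; apply: comb_pos.
  pose s j := alpha * Psi1 j j / D j j.
  have hs : forall j, 0 <= s j <= 1.
    by move=> j; rewrite /s /D !mxE; apply: frac_in01.
  exists (\col_j (s j * y1 j 0 + (1 - s j) * y0 j 0)); split.
    apply/matrixP => j k; rewrite (ord1 k).
    have dD : is_diag_mx D.
      apply/is_diag_mxP => i l hil; rewrite /D !mxE.
      by rewrite (is_diag_mxP dg0) // (is_diag_mxP dg1) // !mulr0 addr0.
    have r : forall (A B : 'cV[R]_n), (alpha *: A + (1 - alpha) *: B) j 0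
        = alpha * A j 0 + (1 - alpha) * B j 0 by move=> A B; rewrite !mxE.
    rewrite r (diag_mul D _ j dD) (diag_mul Psi1 y1 j dg1) (diag_mul Psi0 y0 j dg0).
    rewrite /s; have hcj := hc j.
    rewrite /D !mxE in hcj *.
    by field; rewrite gt_eqF.
  have [hy1 hy0] := (proj1 (hbox y1) hw1, proj1 (hbox y0) hw0).
  apply/hbox => j; rewrite mxE; exact: ebox_conv (hs j) (hy1 j) (hy0 j).
Qed.
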